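(* Let $G=(V,E)$ be a directed graph in which every node has at least one out-neighbour, let $\alpha\in(0,1)$, $s\in V$, $r_{max}>0$, $\epsilon>0$, $\delta\in(0,1]$ and $p_f\in(0,1)$. Run the FORA estimator (described in the context) with $\omega=r_{sum}\cdot\frac{(2\epsilon/3+2)\ln(2/p_f)}{\epsilon^2\delta}$, where $r_{sum}$ is the total residue after Forward Push. Then for every node $t$ with $\pi(s,t)>\delta$, the returned estimate satisfies $|\pi(s,t)-\hat{\pi}(s,t)|\le\epsilon\cdot\pi(s,t)$ with probability at least $1-p_f$.
   Context: Random walk with restart from a node $u$: starting at $u$, at each step the walk terminates at the current node with probability $\alpha$, and otherwise moves to an out-neighbour of the current node chosen uniformly at random. The personalized PageRank $\pi(u,t)$ is the probability that such a walk from $u$ terminates at $t$. $N^{out}(v)$ denotes the set of out-neighbours of $v$. Forward Push (source $s$, threshold $r_{max}$): initialise residues $r(s,s)=1$, $r(s,v)=0$ for $v\neq s$, and reserves $\pi^\circ(s,v)=0$ for all $v$. While some node $v$ has $r(s,v)/|N^{out}(v)|>r_{max}$, pick such a $v$; for each $u\in N^{out}(v)$ increase $r(s,u)$ by $(1-\alpha)r(s,v)/|N^{out}(v)|$; increase $\pi^\circ(s,v)$ by $\alpha\, r(s,v)$; set $r(s,v)=0$. FORA estimator (parameter $\omega>0$): run Forward Push, let $r_{sum}=\sum_{v} r(s,v)$, and set $\hat{\pi}(s,v)=\pi^\circ(s,v)$ for all $v$. For each node $v_i$ with $r(s,v_i)>0$, let $\omega_i=\lceil r(s,v_i)\,\omega/r_{sum}\rceil$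 and $a_i=\frac{r(s,v_i)}{r_{sum}}\cdot\frac{\omega}{\omega_i}$; generate $\omega_i$ independent random walks with restart from $v_i$, and for each, if it terminates at $t$, increase $\hat{\pi}(s,t)$ by $a_i\, r_{sum}/\omega$. Return all $\hat{\pi}(s,v)$. *)

(* Defs.v *)
From HB Require Import structures.
From mathcomp Require Import all_boot all_order all_algebra.
From mathcomp Require Import all_classical all_reals all_analysis.
Unset Printing Implicit Defensive.
Import Order.TTheory GRing.Theory Num.Theory numFieldNormedType.Exports.
Local Open Scope ring_scope.

Section FORA.
Variables (R : realType) (V : finType).
(* the directed graph: N v = set of out-neighbours of v *)
Variable N : V -> {set V}.
Variable alpha : R.

Fixpoint walk_at (k : nat) (u t : V) : R :=
  match k with
  | 0%N => (u == t)%:R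
  | k'.+1 => \sum_(w in N u) walk_at k' w t / #|N u|%:R
  end.

(* Probability that the random walk with restart from u terminates at t
   after exactly k moves: it moves k times (prob (1-alpha)^k along the walk)
   and then terminates (prob alpha). *)
Definition rwr_term_at (u t : V) (k : nat) : R :=
  (1 - alpha) ^+ k * walk_at k u t * alpha.

Definition ppr (u t : V) : R := limn (series (rwr_term_at u t)).

(* A state is (residues r(s,.), reserves pi°(s,.)). *)
Definition fp_state := ((V -> R) * (V -> R))%type.

Definition fp_init (s : V) : fp_state :=
  (fun v => (v == s)%:R, fun _ => 0).

(* One push on node v (allowed when r(s,v)/|N^out(v)| > rmax).  The residue
   r(s,v) being pushed is its value before the push; self-loop contributions
   to v are kept (mass-preserving reading). *)
Definition fp_push (st : fp_state) (v : V) : fp_state :=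
  let r := st.1 in let p := st.2 in
  (fun u => (if u == v then 0 else r u)
            + (if u \in N v then (1 - alpha) * r v / #|N v|%:R else 0),
   fun u => p u + (if u == v then alpha * r v else 0)).

Inductive fp_reach (rmax : R) : fp_state -> fp_state -> Prop :=
  | fp_refl st : fp_reach rmax st st
  | fp_step st v st' : rmax < st.1 v / #|N v|%:R ->
      fp_reach rmax (fp_push st v) st' -> fp_reach rmax st st'.

Definition fp_terminal (rmax : R) (st : fp_state) : Prop :=
  forall v, ~ (rmax < st.1 v / #|N v|%:R).

Definition forward_push_output (s : V) (rmax : R) (st : fp_state) : Prop :=
  fp_reach rmax (fp_init s) st /\ fp_terminal rmax st.

Definition rsum (r : V -> R) : R := \sum_v r v.

Definition omega_i (r : V -> R) (omega : R) (v : V) : nat :=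
  `|Num.ceil (r v * omega / rsum r)|%N.

Definition a_i (r : V -> R) (omega : R) (v : V) : R :=
  r v / rsum r * (omega / (omega_i r omega v)%:R).

Definition walk_starts (r : V -> R) (omega : R) : seq V :=
  flatten [seq nseq (omega_i r omega v) v | v <- enum V & 0 < r v].

(* Estimate returned by FORA, given the termination nodes x j of the walks. *)
Definition fora_estimate (s : V) (st : fp_state) (omega : R)
  (x : {ffun 'I_(size (walk_starts st.1 omega)) -> V}) (t : V) : R :=
  st.2 t + \sum_(j < size (walk_starts st.1 omega))
     (if x j == t then a_i st.1 omega (nth s (walk_starts st.1 omega) j)
                        * rsum st.1 / omega else 0).

(* Probability of an event on the outcomes of the independent walks: the
   j-th walk starts at L_j and terminates at node y with probability
   ppr L_j y, independently of the others. *)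
Definition walks_prob (s : V) (L : seq V) (E : pred {ffun 'I_(size L) -> V}) : R :=
  \sum_(x : {ffun 'I_(size L) -> V})
     (\prod_(j < size L) ppr (nth s L j) (x j)) * (E x)%:R.

Definition fora_success_prob (s : V) (st : fp_state) (omega eps : R) (t : V) : R :=
  walks_prob s (walk_starts st.1 omega) [pred x | `|ppr s t - fora_estimate s st omega x t| <= eps * ppr s t].

End FORA.

Arguments walk_at {R V}. Arguments rwr_term_at {R V}. Arguments ppr {R V}.
Arguments fp_init {R V}. Arguments fp_push {R V}. Arguments fp_reach {R V}.
Arguments fp_terminal {R V}. Arguments forward_push_output {R V}.
Arguments rsum {R V}. Arguments omega_i {R V}. Arguments a_i {R V}.
Arguments walk_starts {R V}. Arguments fora_estimate {R V}.
Arguments walks_prob {R V}. Arguments fora_success_prob {R V}.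

(* Main.v *)
Require Import Defs.
From HB Require Import structures.
From mathcomp Require Import all_boot all_order all_algebra.
From mathcomp Require Import all_classical all_reals all_analysis.
From mathcomp Require Import ring lra.
Import Order.TTheory GRing.Theory Num.Theory numFieldNormedType.Exports.
Local Open Scope classical_set_scope.
Local Open Scope ring_scope.
Lemma cvg_sumR (R : realType) (I : Type) (r : seq I) (P : pred I)
  (f : I -> nat -> R) (l : I -> R) :
  (forall i, f i @ \oo --> l i) ->
  (fun n => \sum_(i <- r | P i) f i n) @ \oo --> \sum_(i <- r | P i) l i.
Proof.
move=> H; elim: r => [|i r IH].
  under eq_cvg do rewrite big_nil.
  rewrite big_nil; exact: cvg_cst.
under eq_cvg do rewrite big_cons.
rewrite big_cons; case: (P i) => //.
exact: cvgD.
Qed.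

Section PPR.
Variables (R : realType) (V : finType) (N : V -> {set V}) (alpha : R).
Hypothesis HN : forall v, N v != finset.set0.
Hypothesis Ha : 0 < alpha < 1.
Local Notation walk := (@walk_at R V N).

Lemma cardN_gt0 u : (0 < #|N u|)%N.
Proof. by rewrite card_gt0 HN. Qed.

Lemma cardN_neq0 u : (#|N u|%:R : R) != 0.
Proof. by rewrite pnatr_eq0 -lt0n cardN_gt0. Qed.

Lemma walk_ge0 k u t : 0 <= walk k u t.
Proof.
elim: k u => [|k IH] u /=; first by rewrite ler0n.
by apply: sumr_ge0 => w _; rewrite divr_ge0 ?IH ?ler0n.
Qed.

Lemma walk_sum1 k u : \sum_t walk k u t = 1 :> R.
Proof.
elim: k u => [|k IH] u /=.
  rewrite (bigD1 u) //= eqxx big1 ?addr0 // => t /negbTE.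
  by rewrite eq_sym => ->.
rewrite exchange_big /=.
transitivity (\sum_(w in N u) (#|N u|%:R)^-1 : R).
  by apply: eq_bigr => w _; rewrite -mulr_suml IH mul1r.
by rewrite sumr_const -[LHS]mulr_natr mulVf // cardN_neq0.
Qed.

Lemma walk_le1 k u t : walk k u t <= 1.
Proof.
rewrite -(walk_sum1 k u) (bigD1 t) //= lerDl.
by apply: sumr_ge0 => *; apply: walk_ge0.
Qed.

Lemma rwr_ge0 u t k : 0 <= rwr_term_at N alpha u t k.
Proof.
case/andP: Ha => a0 a1.
by rewrite /rwr_term_at !mulr_ge0 ?walk_ge0 ?exprn_ge0 ?subr_ge0 ?ltW.
Qed.

Lemma rwr_sum u k : \sum_t rwr_term_at N alpha u t k = geometric alpha (1 - alpha) k.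
Proof.
rewrite /rwr_term_at /geometric /=.
under eq_bigr do rewrite -mulrA mulrCA.
by rewrite -mulr_suml walk_sum1 mul1r mulrC.
Qed.

Lemma series_sum u n :
  \sum_t series (rwr_term_at N alpha u t) n = series (geometric alpha (1 - alpha)) n.
Proof.
rewrite /series /= exchange_big /=.
by apply: eq_bigr => k _; rewrite rwr_sum.
Qed.

Lemma geom_le1 n : series (geometric alpha (1 - alpha)) n <= 1.
Proof.
case/andP: Ha => a0 a1.
have h1 : 1 - alpha != 1 by rewrite -subr_eq0 addrAC subrr add0r oppr_eq0 lt0r_neq0.
rewrite geometric_seriesE //=.
have -> : 1 - (1 - alpha) = alpha by rewrite opprB addrC subrK.
rewrite mulrC mulrA mulVf ?lt0r_neq0 // mul1r.
by rewrite lerBlDr lerDl exprn_ge0 // subr_ge0 ltW.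
Qed.

Lemma ppr_cvg u t : series (rwr_term_at N alpha u t) @ \oo --> ppr N alpha u t.
Proof.
apply: cvgP (ppr N alpha u t) _ .
apply: nondecreasing_is_cvgn.
  by apply/nondecreasing_seqP => n; rewrite seriesSr lerDl rwr_ge0.
exists 1 => _ [n _ <-].
rewrite (le_trans _ (geom_le1 n)) // -(series_sum u n) (bigD1 t) //= lerDl.
by apply: sumr_ge0 => i _; rewrite /series /=; apply: sumr_ge0 => *; apply: rwr_ge0.
Qed.

Local Notation rwr := (rwr_term_at N alpha).
Local Notation ppr := (ppr N alpha).

Lemma ppr_ge0 u t : 0 <= ppr u t.
Proof.
have H := ppr_cvg u t.
rewrite -(cvg_lim _ H) //.
apply: limr_ge; first by apply: cvgP H.
by near=> n; rewrite /series /=; apply: sumr_ge0 => *; apply: rwr_ge0.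
Unshelve. all: by end_near.
Qed.

Lemma ppr_sum1 u : \sum_t ppr u t = 1.
Proof.
have H1 : (fun n => \sum_t series (rwr u t) n) @ \oo --> \sum_t ppr u t.
  by apply: cvg_sumR => t; apply: ppr_cvg.
have H2 : (fun n => \sum_t series (rwr u t) n) @ \oo --> (1 : R).
  under eq_cvg do rewrite series_sum.
  case/andP: Ha => a0 a1.
  have Hz : `|1 - alpha| < 1 by rewrite ger0_norm ?subr_ge0 ?ltW // ltrBlDr ltrDl.
  have Hg := @cvg_geometric_series R alpha _ Hz.
  have E : alpha * (1 - (1 - alpha))^-1 = 1.
    by rewrite opprB addrC subrK mulfV // lt0r_neq0.
  by rewrite E in Hg.
exact: (cvg_unique _ H1 H2).
Qed.

Lemma series_rec u t n :
  series (rwr u t) n.+1 = alpha * (u == t)%:R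
     + (1 - alpha) / #|N u|%:R * \sum_(w in N u) series (rwr w t) n.
Proof.
rewrite /series /= big_nat_recl //; congr (_ + _).
  by rewrite /rwr_term_at /= expr0 mul1r mulrC.
rewrite exchange_big /= mulr_sumr; apply: eq_bigr => k _.
rewrite /rwr_term_at /= [in LHS]mulr_sumr [in LHS]mulr_suml [in RHS]mulr_sumr.
by apply: eq_bigr => w _; rewrite exprS; ring.
Qed.

Lemma ppr_rec u t :
  ppr u t = alpha * (u == t)%:R + (1 - alpha) / #|N u|%:R * \sum_(w in N u) ppr w t.
Proof.
have H1 : (fun n => series (rwr u t) n.+1) @ \oo --> ppr u t.
  by rewrite (cvg_shiftS (fun n => series (rwr u t) n)); apply: ppr_cvg.
have H2 : (fun n => series (rwr u t) n.+1) @ \oo -->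
   alpha * (u == t)%:R + (1 - alpha) / #|N u|%:R * \sum_(w in N u) ppr w t.
  under eq_cvg do rewrite series_rec.
  apply: cvgD; first exact: cvg_cst.
  apply: cvgMl_tmp; apply: cvg_sumR => w; exact: ppr_cvg.
exact: (cvg_unique _ H1 H2).
Qed.

End PPR.
Lemma sum_but (V : finType) (R : realType) (v : V) (g h : V -> R) :
  \sum_u (if u == v then 0 else g u) * h u = \sum_u g u * h u - g v * h v.
Proof.
rewrite [in RHS](bigD1 v) //= [in LHS](bigD1 v) //= eqxx mul0r add0r addrC addrK.
by apply: eq_bigr => u /negbTE ->.
Qed.

Lemma sum_in (V : finType) (R : realType) (S : {set V}) (K : R) (h : V -> R) :
  \sum_u (if u \in S then K else 0) * h u = K * \sum_(u in S) h u.
Proof.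
rewrite [in RHS]big_mkcond mulr_sumr; apply: eq_bigr => u _.
by case: (u \in S); rewrite ?mul0r ?mulr0.
Qed.

Lemma sum_but1 (V : finType) (R : realType) (v : V) (g : V -> R) :
  \sum_u (if u == v then 0 else g u) = \sum_u g u - g v.
Proof.
rewrite [in RHS](bigD1 v) //= [in LHS](bigD1 v) //= eqxx add0r addrC addrK.
by apply: eq_bigr => u /negbTE ->.
Qed.

Lemma sum_in1 (V : finType) (R : realType) (S : {set V}) (K : R) :
  \sum_u (if u \in S then K else 0) = K *+ #|S|.
Proof. by rewrite -big_mkcond sumr_const. Qed.

Section FP.
Variables (R : realType) (V : finType) (N : V -> {set V}) (alpha : R) (s : V) (rmax : R).
Hypothesis HN : forall v, N v != finset.set0.
Hypothesis Ha : 0 < alpha < 1.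
Hypothesis Hr : 0 < rmax.

Definition fp_inv (st : fp_state R V) : Prop :=
  [/\ (forall v, 0 <= st.1 v), (forall v, 0 <= st.2 v), 0 < rsum st.1 &
      forall t, ppr N alpha s t = st.2 t + \sum_v st.1 v * ppr N alpha v t].

Lemma fp_inv_init : fp_inv (fp_init s).
Proof.
split => /=.
- by move=> v; rewrite ler0n.
- by move=> v.
- by rewrite /rsum (bigD1 s) //= eqxx big1 ?addr0 ?ltr01 // => u /negbTE ->.
- move=> t; rewrite add0r (bigD1 s) //= eqxx mul1r big1 ?addr0 // => u /negbTE ->.
  by rewrite mul0r.
Qed.

Lemma fp_inv_push st v : fp_inv st -> rmax < st.1 v / #|N v|%:R ->
  fp_inv (fp_push N alpha st v).
Proof.
case: st => r p [/= r0 p0 rs0 Hinv] Hv.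
case/andP: Ha => a0 a1.
have n0 : (0 : R) < #|N v|%:R by rewrite ltr0n cardN_gt0.
have rv0 : 0 < r v.
  move: Hv; rewrite ltr_pdivlMr // => Hv.
  by apply: lt_trans Hv; rewrite mulr_gt0.
split => /=.
- move=> u; apply: addr_ge0; first by case: ifP.
  by case: ifP => // _; rewrite divr_ge0 ?mulr_ge0 ?subr_ge0 ?ltW.
- by move=> u; apply: addr_ge0 => //; case: ifP => // _; rewrite mulr_ge0 ?ltW.
- rewrite /rsum big_split /=.
  rewrite sum_but1 sum_in1 -[_ *+ _]mulr_natr mulfVK ?lt0r_neq0 //.
  have : r v <= \sum_u r u.
    by rewrite (bigD1 v) //= lerDl; apply: sumr_ge0 => *.
  move=> H; rewrite addrAC.
  apply: (@lt_le_trans _ _ ((1 - alpha) * r v)); first by rewrite mulr_gt0 // subr_gt0.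
  by move: H; set S := \sum_u r u; lra.
- move=> t; rewrite Hinv.
  under [X in _ = _ + X]eq_bigr do rewrite mulrDl.
  rewrite big_split /= sum_but sum_in (@ppr_rec _ _ _ _ HN Ha v t).
  rewrite (eq_sym t v); case: (v == t); rewrite ?mulr1 ?mulr0 ?addr0.
  + by field; rewrite lt0r_neq0.
  + by field; rewrite lt0r_neq0.
Qed.

Lemma fp_inv_reach st st' : fp_reach N alpha rmax st st' -> fp_inv st -> fp_inv st'.
Proof.
elim => [//| st0 v st1 Hv _ IH] H; apply: IH; exact: fp_inv_push.
Qed.

End FP.
Section ExpBounds.
Variable R : realType.

Lemma series_exp_nd (x : R) : 0 <= x -> nondecreasing_seq (series (exp_coeff x)).
Proof.
by move=> x0; apply/nondecreasing_seqP => n; rewrite seriesSr lerDl exp_coeff_ge0.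
Qed.

Lemma expR_ub (x : R) : 0 <= x -> x < 3 ->
  expR x <= 1 + x + x ^+ 2 / 2 / (1 - x / 3).
Proof.
move=> x0 x3.
set q := x / 3; set d := 1 - q.
have q0 : 0 <= q by rewrite /q divr_ge0.
have q1 : q < 1 by rewrite /q ltr_pdivrMr // mul1r.
have d0 : 0 < d by rewrite /d subr_gt0.
set B := 1 + x + x ^+ 2 / 2 / d.
have B1 : 1 <= B.
  by rewrite /B -addrA lerDl addr_ge0 // !divr_ge0 ?exprn_ge0 // ltW.
have Hm : forall m, series (exp_coeff x) m.+2 + exp_coeff x m.+2 / d <= B.
  elim => [|m IH].
    rewrite /series /exp_coeff /= big_nat_recr //= big_nat_recr //= big_geq //.
    by rewrite add0r expr0 expr1 /B !divr1 /=.
  rewrite seriesSr -addrA (le_trans _ IH) // lerD2l.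
  set a := exp_coeff x m.+2.
  have a0 : 0 <= a by apply: exp_coeff_ge0.
  have -> : exp_coeff x m.+3 = a * (x / m.+3%:R).
    rewrite /a /exp_coeff /= factS natrM exprS.
    rewrite invfM.
    by ring.
  have y3 : x / m.+3%:R <= q.
    rewrite /q ler_wpM2l // lef_pV2 ?posrE ?ltr0n //.
    by rewrite ler_nat.
  set y := x / m.+3%:R in y3 *.
  have -> : a + a * y / d = a * ((d + y) / d).
    by field; rewrite lt0r_neq0.
  apply: ler_wpM2l => //.
  have dn : d != 0 by rewrite lt0r_neq0.
  rewrite -(ler_pM2r d0) mulfVK // mulVf //.
  by rewrite /d; lra.
have Hall : forall n, series (exp_coeff x) n <= B.
  case => [|[|m]].
  - by rewrite /series /= big_geq // (le_trans ler01).
  - by rewrite /series /= big_nat1 /exp_coeff /= expr0 divr1.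
  - apply: le_trans (Hm m); rewrite lerDl; apply: divr_ge0; [exact: exp_coeff_ge0 | exact: ltW].
rewrite /expR; apply: limr_le; first exact: is_cvg_series_exp_coeff.
by near=> n; apply: Hall.
Unshelve. all: by end_near.
Qed.

Lemma expRN_ub (x : R) : 0 <= x -> expR (- x) <= 1 - x + x ^+ 2 / 2.
Proof.
move=> x0.
have H := nondecreasing_cvgn_le (@series_exp_nd x x0) (is_cvg_series_exp_coeff x) 4.
have E : series (exp_coeff x) 4 = 1 + x + x ^+ 2 / 2 + x ^+ 3 / 6.
  rewrite /series /exp_coeff /= !big_nat_recr //= big_geq //.
  by rewrite add0r expr0 expr1 !divr1.
rewrite E in H.
have P0 : 0 < 1 - x + x ^+ 2 / 2 by nra.
rewrite expRN -(ler_pM2r (expR_gt0 x)) mulVf ?lt0r_neq0 ?expR_gt0 //.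
apply: le_trans (ler_wpM2l (ltW P0) H).
nra.
Qed.

End ExpBounds.
Section Conc.
Variable R : realType.

Definition gf (th : R) := th ^+ 2 / 2 / (1 - th / 3).

Lemma gf_ge0 th : 0 <= th < 3 -> 0 <= gf th.
Proof.
case/andP => t0 t3; rewrite /gf !divr_ge0 ?exprn_ge0 //.
by rewrite subr_ge0 ler_pdivrMr // mul1r ltW.
Qed.

Lemma Lg (th y : R) : 0 <= y <= 1 -> 0 <= th < 3 ->
  (th * y) ^+ 2 / 2 / (1 - th * y / 3) <= y * gf th.
Proof.
case/andP => y0 y1 /andP[t0 t3].
have D2 : 0 < 1 - th / 3 by rewrite subr_gt0 ltr_pdivrMr // mul1r.
have D12 : 1 - th / 3 <= 1 - th * y / 3.
  by rewrite lerD2l lerN2 ler_pM2r // ler_piMr.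
have D1 : 0 < 1 - th * y / 3 by apply: lt_le_trans D12.
rewrite /gf mulrA ler_pdivrMr // [in X in _ <= X]mulrAC ler_pdivlMr //.
have A0 : 0 <= (th * y) ^+ 2 / 2 by rewrite divr_ge0 // exprn_ge0 // mulr_ge0.
have AB : (th * y) ^+ 2 / 2 <= y * (th ^+ 2 / 2).
  have h : th ^+ 2 * y ^+ 2 <= th ^+ 2 * y.
    by apply: ler_wpM2l; rewrite ?exprn_ge0 // expr2 ler_piMr.
  by rewrite exprMn; move: h; nra.
apply: (le_trans (ler_wpM2l A0 D12)).
exact: (ler_wpM2r (ltW D1) AB).
Qed.

Lemma mgfU (q y th : R) : 0 <= q -> 0 <= y <= 1 -> 0 <= th < 3 ->
  1 + q * (expR (th * y) - 1) <= expR (q * y * (th + gf th)).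
Proof.
move=> q0 hy ht.
have /andP[y0 y1] := hy; have /andP[t0 t3] := ht.
apply: le_trans (expR_ge1Dx _).
rewrite lerD2l -mulrA ler_wpM2l //.
have z3 : th * y < 3.
  by apply: le_lt_trans t3; rewrite ler_piMr.
have := @expR_ub R _ (mulr_ge0 t0 y0) z3.
have := @Lg _ _ hy ht.
move=> h1 h2.
rewrite lerBlDl mulrDr (mulrC y th).
apply: (le_trans h2); rewrite -addrA lerD2l lerD2l; exact: h1.
Qed.

Lemma mgfL (q y th : R) : 0 <= q -> 0 <= y <= 1 -> 0 <= th < 3 ->
  1 + q * (expR (- (th * y)) - 1) <= expR (q * y * (gf th - th)).
Proof.
move=> q0 hy ht.
have /andP[y0 y1] := hy; have /andP[t0 t3] := ht.
apply: le_trans (expR_ge1Dx _).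
rewrite lerD2l -mulrA ler_wpM2l //.
have z3 : th * y < 3.
  by apply: le_lt_trans t3; rewrite ler_piMr.
have z0 : 0 <= th * y by rewrite mulr_ge0.
have := @expRN_ub R _ z0.
have := @Lg _ _ hy ht.
have D1 : 0 < 1 - th * y / 3 by rewrite subr_gt0 ltr_pdivrMr // mul1r.
have D11 : 1 - th * y / 3 <= 1 by rewrite lerBlDr lerDl divr_ge0.
have h3 : (th * y) ^+ 2 / 2 <= (th * y) ^+ 2 / 2 / (1 - th * y / 3).
  by rewrite ler_pdivlMr // ler_piMr // divr_ge0 ?exprn_ge0.
move=> h1 h2.
rewrite lerBlDl mulrDr mulrN (mulrC y th).
apply: (le_trans h2).
have := le_trans h3 h1. lra.
Qed.

End Conc.
Arguments gf {R}. Arguments Lg {R}. Arguments mgfU {R}. Arguments mgfL {R}. Arguments gf_ge0 {R}.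
Section Tail.
Variables (R : realType) (V : finType) (n : nat) (p : 'I_n -> V -> R).
Variables (c : 'I_n -> R) (a : R) (t : V).
Hypothesis p0 : forall j y, 0 <= p j y.
Hypothesis p1 : forall j, \sum_y p j y = 1.
Hypothesis a0 : 0 < a.
Hypothesis c0 : forall j, 0 <= c j <= a.

Local Notation w x := (\prod_(j < n) p j (x j)).
Definition Ssum (x : {ffun 'I_n -> V}) : R := \sum_(j < n) (if x j == t then c j else 0).
Definition mu : R := \sum_(j < n) c j * p j t.

Lemma Eprod (f : 'I_n -> V -> R) :
  \sum_(x : {ffun 'I_n -> V}) w x * \prod_(j < n) f j (x j)
  = \prod_(j < n) \sum_y p j y * f j y.
Proof.
rewrite bigA_distr_bigA; apply: eq_bigr => x _.
by rewrite -big_split.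
Qed.

Lemma w_sum1 : \sum_(x : {ffun 'I_n -> V}) w x = 1.
Proof.
rewrite -(bigA_distr_bigA (fun j y => p j y)); apply: big1 => j _; exact: p1.
Qed.

Lemma w_ge0 (x : {ffun 'I_n -> V}) : 0 <= w x.
Proof. by apply: prodr_ge0 => j _. Qed.

Lemma pt_le1 j : p j t <= 1.
Proof.
rewrite -(p1 j) (bigD1 t) //= lerDl; exact: sumr_ge0.
Qed.

Lemma mgf (k : R) :
  \sum_(x : {ffun 'I_n -> V}) w x * expR (k * Ssum x)
  = \prod_(j < n) (1 + p j t * (expR (k * c j) - 1)).
Proof.
transitivity (\sum_(x : {ffun 'I_n -> V}) w x *
   \prod_(j < n) expR (k * (if x j == t then c j else 0))).
  by apply: eq_bigr => x _; rewrite /Ssum mulr_sumr expR_sum.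
rewrite (Eprod (fun j y => expR (k * (if y == t then c j else 0)))); apply: eq_bigr => j _.
rewrite (bigD1 t) //= eqxx.
rewrite (eq_bigr (fun y => p j y)); last first.
  by move=> y /negbTE ->; rewrite mulr0 expR0 mulr1.
have -> : \sum_(i | i != t) p j i = 1 - p j t.
  by rewrite -(p1 j) [in RHS](bigD1 t) //= [RHS]addrC addKr.
ring.
Qed.

Lemma tail (th lam : R) : 0 < th < 3 ->
  \sum_(x : {ffun 'I_n -> V}) w x * (lam < `|mu - Ssum x|)%R%:R
  <= 2 * expR ((gf th * mu - th * lam) / a).
Proof.
case/andP => t0 t3.
have ht : 0 <= th < 3 by rewrite ltW.
set k := th / a.
have k0 : 0 < k by rewrite divr_gt0.
have Hy j : 0 <= c j / a <= 1.
  have /andP[h1 h2] := c0 j; apply/andP; split; first by rewrite divr_ge0 // ltW.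
  by rewrite ler_pdivrMr // mul1r.
have Hpt : forall x, (lam < `|mu - Ssum x|)%R%:R <=
   expR (- (k * (mu + lam))) * expR (k * Ssum x)
   + expR (k * (mu - lam)) * expR ((- k) * Ssum x).
  move=> x; rewrite -!expRD.
  case: ltP => H; last by rewrite addr_ge0 ?expR_ge0.
  rewrite (_ : true%:R = 1) //.
  move: H; rewrite ltr_normr => /orP[H|H].
  - have h1 := expR_ge0 (- (k * (mu + lam)) + k * Ssum x).
    have h2 : 1 <= expR (k * (mu - lam) + (- k) * Ssum x).
      rewrite -expR0 ler_expR.
      have -> : k * (mu - lam) + (- k) * Ssum x = k * (mu - lam - Ssum x) by ring.
      by apply: mulr_ge0; [exact: ltW | lra].
    lra.
  - have h1 := expR_ge0 (k * (mu - lam) + (- k) * Ssum x).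
    have h2 : 1 <= expR (- (k * (mu + lam)) + k * Ssum x).
      rewrite -expR0 ler_expR.
      have -> : - (k * (mu + lam)) + k * Ssum x = k * (Ssum x - mu - lam) by ring.
      by apply: mulr_ge0; [exact: ltW | lra].
    lra.
apply: (le_trans (y := \sum_(x : {ffun 'I_n -> V}) w x *
   (expR (- (k * (mu + lam))) * expR (k * Ssum x)
   + expR (k * (mu - lam)) * expR ((- k) * Ssum x)))).
  by apply: ler_sum => x _; apply: ler_wpM2l; [exact: w_ge0 | exact: Hpt].
under eq_bigr do rewrite mulrDr.
rewrite big_split /=.
under eq_bigr do rewrite mulrCA.
under [X in _ + X <= _]eq_bigr do rewrite mulrCA.
rewrite -!mulr_sumr !mgf.
set E := expR ((gf th * mu - th * lam) / a).
have HU : \prod_(j < n) (1 + p j t * (expR (k * c j) - 1))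
          <= expR (\sum_(j < n) p j t * (c j / a) * (th + gf th)).
  rewrite expR_sum; apply: ler_prod => j _; apply/andP; split.
    have := p0 j t; have : 1 <= expR (k * c j).
      have /andP[cj0 _] := c0 j; by rewrite -expR0 ler_expR mulr_ge0 // ltW.
    by nra.
  have -> : k * c j = th * (c j / a) by rewrite /k; ring.
  exact: mgfU.
have HL : \prod_(j < n) (1 + p j t * (expR ((- k) * c j) - 1))
          <= expR (\sum_(j < n) p j t * (c j / a) * (gf th - th)).
  rewrite expR_sum; apply: ler_prod => j _; apply/andP; split.
    have := p0 j t; have := pt_le1 j; have := expR_ge0 ((- k) * c j).
    by nra.
  have -> : (- k) * c j = - (th * (c j / a)) by rewrite /k; ring.
  exact: mgfL.
have SU : \sum_(j < n) p j t * (c j / a) * (th + gf th) = (th + gf th) * mu / a.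
  rewrite /mu mulr_sumr mulr_suml; apply: eq_bigr => j _; ring.
have SL : \sum_(j < n) p j t * (c j / a) * (gf th - th) = (gf th - th) * mu / a.
  rewrite /mu mulr_sumr mulr_suml; apply: eq_bigr => j _; ring.
rewrite SU in HU; rewrite SL in HL.
have e1 : expR (- (k * (mu + lam))) * expR ((th + gf th) * mu / a) = E.
  by rewrite -expRD /E /k; congr expR; field; rewrite lt0r_neq0.
have e2 : expR (k * (mu - lam)) * expR ((gf th - th) * mu / a) = E.
  by rewrite -expRD /E /k; congr expR; field; rewrite lt0r_neq0.
have -> : 2 * E = E + E by ring.
rewrite -[X in _ <= X + _]e1 -[X in _ <= _ + X]e2.
apply: lerD; apply: ler_wpM2l; rewrite ?expR_ge0 //.
Qed.

End Tail.
Arguments mu {R V n}. Arguments Ssum {R V n}.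
Section Fora.
Variables (R : realType) (V : finType).

Lemma omegai_prop (r : V -> R) om v : 0 < r v -> 0 < om -> 0 < rsum r ->
  1 <= (omega_i r om v)%:R :> R /\ r v * om / rsum r <= (omega_i r om v)%:R.
Proof.
move=> rv om0 rs0.
have x0 : 0 < r v * om / rsum r by rewrite divr_gt0 // mulr_gt0.
rewrite /omega_i natr_absz ger0_norm; last by rewrite ltW // Num.Theory.ceil_gt0.
split; last exact: Num.Theory.ceil_ge.
by rewrite ler1z -gtz0_ge1 Num.Theory.ceil_gt0.
Qed.

Lemma walk_starts_pos (r : V -> R) om x : x \in walk_starts r om -> 0 < r x.
Proof.
rewrite /walk_starts => /flattenP [sq /mapP [v Hv ->]] /nseqP [-> _].
by move: Hv; rewrite mem_filter => /andP[].
Qed.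

Lemma ci_eq (r : V -> R) om v : 0 < r v -> 0 < om -> 0 < rsum r ->
  a_i r om v * rsum r / om = r v / (omega_i r om v)%:R.
Proof.
move=> rv om0 rs0; have [h1 _] := @omegai_prop _ _ _ rv om0 rs0.
rewrite /a_i; field.
by rewrite !lt0r_neq0 //; apply: lt_le_trans h1.
Qed.

Lemma sum_walks (r : V -> R) om (s : V) (G : V -> R) :
  \sum_(j < size (walk_starts r om)) G (nth s (walk_starts r om) j)
  = \sum_(v | 0 < r v) G v *+ omega_i r om v.
Proof.
rewrite -(big_mkord xpredT (fun j => G (nth s (walk_starts r om) j))).
rewrite -(big_nth s xpredT G).
rewrite /walk_starts big_flatten big_map big_filter big_enum_cond /=.
by apply: eq_bigr => v _; rewrite big_nseq iter_addr_0.
Qed.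

End Fora.
Arguments omegai_prop {R V r om v}. Arguments walk_starts_pos {R V r om x}. Arguments ci_eq {R V r om v}. Arguments sum_walks {R V}.
Theorem lemma3p3 (R : realType) (V : finType) (N : V -> {set V})
  (alpha : R) (s : V) (rmax eps delta pf : R) (st : fp_state R V) :
  (forall v, N v != finset.set0) ->
  0 < alpha < 1 -> 0 < rmax -> 0 < eps -> 0 < delta <= 1 -> 0 < pf < 1 ->
  forward_push_output N alpha s rmax st ->
  let omega := rsum st.1 * ((2 * eps / 3 + 2) * ln (2 / pf) / (eps ^+ 2 * delta)) in
  forall t : V, delta < ppr N alpha s t ->
    1 - pf <= fora_success_prob N alpha s st omega eps t.
Proof.
move=> HN Ha Hr He /andP[d0 d1] /andP[pf0 pf1] [Hreach _] omega t Ht.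
have Hi : @fp_inv R V N alpha s st.
  exact: (@fp_inv_reach R V N alpha s rmax HN Ha Hr _ _ Hreach (@fp_inv_init R V N alpha s)).
case: Hi => r0 pp0 rs0 Hinv.
set K := (2 * eps / 3 + 2) * ln (2 / pf) / (eps ^+ 2 * delta).
have L0 : 0 < ln (2 / pf) by apply: ln_gt0; rewrite ltr_pdivlMr // mul1r; lra.
have K0 : 0 < K by rewrite /K divr_gt0 ?mulr_gt0 ?exprn_gt0 //; lra.
have om0 : 0 < omega by rewrite /omega mulr_gt0.
set L := walk_starts st.1 omega.
pose p (j : 'I_(size L)) y := ppr N alpha (nth s L j) y.
pose c (j : 'I_(size L)) := a_i st.1 omega (nth s L j) * rsum st.1 / omega.
set a := rsum st.1 / omega.
have a0 : 0 < a by rewrite /a divr_gt0.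
have p0 : forall j y, 0 <= p j y by move=> j y; exact: (@ppr_ge0 R V N alpha HN Ha).
have p1 : forall j, \sum_y p j y = 1 by move=> j; exact: (@ppr_sum1 R V N alpha HN Ha).
have c0 : forall j, 0 <= c j <= a.
  move=> j; have hv := walk_starts_pos (mem_nth s (ltn_ord j)).
  rewrite /c ci_eq //.
  have [h1 h2] := omegai_prop hv om0 rs0.
  have m0 : (0 : R) < (omega_i st.1 omega (nth s L j))%:R by apply: lt_le_trans h1.
  apply/andP; split; first by rewrite divr_ge0 ?ltW.
  rewrite ler_pdivrMr // /a mulrAC ler_pdivlMr //.
  by move: h2; rewrite ler_pdivrMr // [X in _ <= X -> _]mulrC.
have Hmu : mu p c t = ppr N alpha s t - st.2 t.
  rewrite /mu.
  rewrite (sum_walks _ _ _ (fun v => a_i st.1 omega v * rsum st.1 / omega * ppr N alpha v t)).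
  rewrite (Hinv t) addrC addKr.
  rewrite big_mkcond /=; apply: eq_bigr => v _.
  case: ifPn => hv.
    have [h1 _] := omegai_prop hv om0 rs0.
    have m0 : (omega_i st.1 omega v)%:R != 0 :> R by rewrite lt0r_neq0 // (lt_le_trans _ h1).
    by rewrite ci_eq // -[LHS]mulr_natr; field.
  have : st.1 v = 0 by move: (r0 v) hv; rewrite le_eqVlt => /orP[/eqP <-|->].
  by move=> ->; rewrite mul0r.
set lam := eps * ppr N alpha s t.
have Hx : forall x, ([pred x | `|ppr N alpha s t - fora_estimate s st omega x t|
                     <= eps * ppr N alpha s t] x)%:R
          = 1 - (lam < `|mu p c t - Ssum c t x|)%R%:R :> R.
  move=> x; rewrite /= Hmu.
  have -> : fora_estimate s st omega x t = st.2 t + Ssum c t x by [].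
  rewrite opprD addrA -/lam.
  by case: leP => _; rewrite ?subr0 ?subrr.
rewrite /fora_success_prob /walks_prob.
under eq_bigr do rewrite Hx mulrBr mulr1.
rewrite sumrB -/L.
have -> : \sum_(x : {ffun 'I_(size L) -> V}) \prod_(j < size L) ppr N alpha (nth s L j) (x j) = 1.
  exact: (@w_sum1 R V (size L) p p1).
rewrite lerD2l lerN2.
set th := eps / (1 + eps / 3).
have th03 : 0 < th < 3.
  apply/andP; split; first by rewrite /th divr_gt0 //; lra.
  by rewrite /th ltr_pdivrMr; lra.
have T := @tail R V (size L) p c a t p0 p1 a0 c0 th lam th03.
apply: le_trans T _.
have gfE : gf th = eps ^+ 2 / (2 * (1 + eps / 3)).
  rewrite /gf /th; field.
  by apply/andP; split; lra.
have X : (gf th * mu p c t - th * lam) / a <= - ln (2 / pf).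
  apply: (@le_trans _ _ ((gf th * ppr N alpha s t - th * lam) / a)).
    have g0 : 0 <= gf th.
      by apply: gf_ge0; case/andP: th03 => h1 h2; rewrite ltW.
    have mle : mu p c t <= ppr N alpha s t by rewrite Hmu lerBlDr lerDl.
    rewrite ler_pM2r ?invr_gt0 // lerD2r; by apply: ler_wpM2l.
  have -> : (gf th * ppr N alpha s t - th * lam) / a
            = - (ppr N alpha s t / delta * ln (2 / pf)).
    rewrite gfE /a /omega /K /lam /th; field.
    by rewrite !lt0r_neq0 //=; lra.
  rewrite lerN2 ler_peMl ?ltW //.
  by rewrite ltr_pdivlMr // mul1r.
have : expR ((gf th * mu p c t - th * lam) / a) <= pf / 2.
  apply: le_trans (_ : expR (- ln (2 / pf)) <= _).
    by rewrite ler_expR.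
  by rewrite expRN lnK ?posrE ?divr_gt0 // invf_div.
lra.
Qed.
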